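(* If $A\subset\mathbb{R}^n$ is monovex and $R\subset\mathbb{R}^n$ is an open box whose faces are parallel to the axes, then the Minkowski sum $A+R=\{a+r: a\in A, r\in R\}$ is monovex.
   Context: A set $A \subseteq \mathbb{R}^n$ is monovex if for every $x,y \in A$ there is a continuous path $\gamma:[0,1]\to A$ with $\gamma(0)=x$, $\gamma(1)=y$ and each coordinate $\gamma_i$ monotone (nondecreasing or nonincreasing). An open box with faces parallel to the axes is a set of the form $\times_{i=1}^n(a_i,b_i)$. *)

(* Defs.v *)
From mathcomp Require Import all_boot all_order all_algebra.
From mathcomp Require Import all_classical all_reals all_analysis.
Set Implicit Arguments. Unset Strict Implicit. Unset Printing Implicit Defensive.
Import Order.TTheory GRing.Theory Num.Theory.
Local Open Scope classical_set_scope.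
Local Open Scope ring_scope.
Import numFieldNormedType.Exports.

Definition monotone_on01 {R : realType} (f : R -> R) : Prop :=
  {in `[0, 1] &, {homo f : s t / s <= t}} \/
  {in `[0, 1] &, {homo f : s t / s <= t >-> t <= s}}.

Definition monovex {R : realType} (n : nat) (A : set 'rV[R]_n) : Prop :=
  forall x y, A x -> A y ->
    exists gamma : R -> 'rV[R]_n,
      {within `[0, 1]%classic, continuous (gamma : R -> _)} /\
      (forall t, t \in `[0, 1] -> A (gamma t)) /\
      gamma 0 = x /\ gamma 1 = y /\
      (forall i : 'I_n, monotone_on01 (fun t => gamma t ord0 i)).

Definition open_box {R : realType} (n : nat) (a b : 'rV[R]_n) : set 'rV[R]_n :=
  [set x | forall i : 'I_n, a ord0 i < x ord0 i < b ord0 i].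

Definition minkowski_sum {R : realType} (n : nat) (A B : set 'rV[R]_n) : set 'rV[R]_n :=
  [set z | exists a b, A a /\ B b /\ z = a + b].

(* Main.v *)
Require Import Defs.
From mathcomp Require Import all_boot all_order all_algebra.
From mathcomp Require Import all_classical all_reals all_analysis.
From mathcomp Require Import lra.
Import Order.TTheory GRing.Theory Num.Theory.
Import numFieldNormedType.Exports.
Local Open Scope classical_set_scope.
Local Open Scope ring_scope.
Section S.
Variable R : realType.

Lemma clamp_mono (a1 a2 b1 b2 c1 c2 : R) : a1 <= a2 -> b1 <= b2 -> c1 <= c2 ->
  Num.min a1 (Num.max b1 c1) <= Num.min a2 (Num.max b2 c2).
Proof.
move=> ha hb hc; rewrite le_min !ge_min !le_max !ge_max.
case: (leP a1 b1); case: (leP b1 c1); case: (leP a1 c1); 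
case: (leP a2 b2); case: (leP b2 c2); case: (leP a2 c2); 
rewrite /= ?orbT ?orbF ?andbT //; lra.
Qed.

Lemma clamp_id (a b v : R) : a <= v -> v <= b -> Num.min b (Num.max a v) = v.
Proof. by move=> ha hb; rewrite (max_idPr ha) (min_idPr hb). Qed.

Lemma key (g : R -> R) (x y l h : R) :
  monotone_on01 g -> g 0 + l <= x -> x <= g 0 + h -> g 1 + l <= y -> y <= g 1 + h ->
  monotone_on01 (fun t => Num.min (g t + h) (Num.max (g t + l) (x + t * (y - x)))).
Proof.
have i01 : forall t : R, t \in `[0, 1] -> 0 <= t <= 1 by move=> t; rewrite in_itv.
have z01 : (0:R) \in `[0, 1] by rewrite in_itv /= lexx ler01.
have o01 : (1:R) \in `[0, 1] by rewrite in_itv /= lexx ler01.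
move=> [gu|gd] h1 h2 h3 h4.
- have gb : forall t, t \in `[0, 1] -> g 0 <= g t <= g 1.
    move=> t ht; have /andP[t0 t1] := i01 _ ht.
    by rewrite (gu _ _ z01 ht t0) (gu _ _ ht o01 t1).
  case: (leP x y) => xy.
  + left => s t hs ht st; apply: clamp_mono; rewrite ?lerD2r ?gu //.
    have /andP[? ?] := i01 _ hs; have /andP[? ?] := i01 _ ht; nra.
  + right => s t hs ht st.
    have /andP[? ?] := i01 _ hs; have /andP[? ?] := i01 _ ht.
    have /andP[? ?] := gb _ hs; have /andP[? ?] := gb _ ht.
    rewrite !clamp_id; nra.
- have gb : forall t, t \in `[0, 1] -> g 1 <= g t <= g 0.
    move=> t ht; have /andP[t0 t1] := i01 _ ht.
    by rewrite (gd _ _ z01 ht t0) (gd _ _ ht o01 t1).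
  case: (leP y x) => xy.
  + right => s t hs ht st; apply: clamp_mono; rewrite ?lerD2r ?gd //.
    have /andP[? ?] := i01 _ hs; have /andP[? ?] := i01 _ ht; nra.
  + left => s t hs ht st.
    have /andP[? ?] := i01 _ hs; have /andP[? ?] := i01 _ ht.
    have /andP[? ?] := gb _ hs; have /andP[? ?] := gb _ ht.
    rewrite !clamp_id; nra.
Qed.
Lemma mx_cont (T : topologicalType) m n (f : T -> 'M[R]_(m, n)) (x : T) :
  (forall i j, {for x, continuous (fun t => f t i j)}) -> {for x, continuous f}.
Proof.
move=> hf; apply/cvg_mx_entourageP => A entA.
apply: filter_forall => i; apply: filter_forall => j.
have H := (cvg_app_entourageP _ _ _).1 (hf i j) A entA.
have {}H := H (nbhs_filter x). apply: filterS H => t At /=. by rewrite mem_set.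
Qed.

Lemma mx_cont_entry (T : topologicalType) m n (f : T -> 'M[R]_(m, n)) (x : T) i j :
  {for x, continuous f} -> {for x, continuous (fun t => f t i j)}.
Proof.
move=> hf; have hf2 := (cvg_mx_entourageP _ _ _ _ _ _).1 hf.
apply/cvg_app_entourageP => A entA.
have H : \forall t \near x, forall i j, (f x i j, f t i j) \in A := hf2 (fmap_filter _ _) A entA.
change (\forall t \near x, A (f x i j, f t i j)).
near=> t.
suff: forall i j, (f x i j, f t i j) \in A by move/(_ i j); rewrite inE.
near: t. exact: H.
Unshelve. all: by end_near.
Qed.
Lemma clamp_cont (T : topologicalType) (g u : T -> R) (h l x y : R) (s : T) :
  {for s, continuous g} -> {for s, continuous u} ->
  {for s, continuous (fun t => Num.min (g t + h) (Num.max (g t + l) (x + u t * (y - x))))}.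
Proof.
move=> gc uc.
apply: (@continuous_min R T (fun t => g t + h)
   (fun t => Num.max (g t + l) (x + u t * (y - x)))).
  by apply: cvgD => //; exact: cvg_cst.
apply: (@continuous_max R T (fun t => g t + l) (fun t => x + u t * (y - x))).
  by apply: cvgD => //; exact: cvg_cst.
apply: cvgD; first exact: cvg_cst.
by apply: cvgM => //; exact: cvg_cst.
Qed.
Lemma clamp_in (g hh ll v aa bb : R) : aa < ll -> hh < bb -> ll <= hh ->
  aa < Num.min (g + hh) (Num.max (g + ll) v) - g < bb.
Proof.
move=> h1 h2 h3.
have m1 : g + ll <= Num.min (g + hh) (Num.max (g + ll) v).
  by rewrite le_min le_max lexx /= andbT lerD2l.
have m2 : Num.min (g + hh) (Num.max (g + ll) v) <= g + hh by rewrite ge_min lexx.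
apply/andP; split; lra.
Qed.
End S.

Theorem lemma2 (R : realType) (n : nat) (A : set 'rV[R]_n) (a b : 'rV[R]_n) :
  monovex A -> monovex (minkowski_sum A (open_box a b)).
Proof.
move=> mA z w [a1 [r1 [Aa1 [Br1 ->]]]] [a2 [r2 [Aa2 [Br2 ->]]]].
have [gamma [gc [gA [g0 [g1 gm]]]]] := mA _ _ Aa1 Aa2.
pose x := a1 + r1; pose y := a2 + r2.
pose lo j := Num.min (r1 ord0 j) (r2 ord0 j).
pose hi j := Num.max (r1 ord0 j) (r2 ord0 j).
pose F j t := Num.min (gamma t ord0 j + hi j)
   (Num.max (gamma t ord0 j + lo j) (x ord0 j + t * (y ord0 j - x ord0 j))).
have Fq : forall t j, (\row_k F k t) ord0 j = F j t by move=> t j; rewrite mxE.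
exists (fun t => \row_k F k t); split; [|split; [|split; [|split]]].
- move=> s; apply: mx_cont => i j.
  have -> : i = ord0 by apply: val_inj => /=; case: i => -[].
  have -> : (fun t : subspace `[0, 1] => from_subspace `[0, 1] (fun t => \row_k F k t) t ord0 j)
      = (fun t : subspace `[0, 1] => F j t).
    by apply: funext => t; rewrite /from_subspace mxE.
  apply: clamp_cont.
    exact: (@mx_cont_entry R _ _ _ (from_subspace `[0, 1] gamma) s ord0 j (gc s)).
  exact: (@continuous_subspaceT R R `[0, 1] id (fun t => cvg_id) s).
- move=> t ht; exists (gamma t), ((\row_k F k t) - gamma t); split; first exact: gA.
  split; last by rewrite addrC subrK.
  move=> j; rewrite !mxE /F; apply: clamp_in.
  + by rewrite /lo lt_min; have /andP[? ?] := Br1 j; have /andP[? ?] := Br2 j; apply/andP.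
  + by rewrite /hi gt_max; have /andP[? ?] := Br1 j; have /andP[? ?] := Br2 j; apply/andP.
  + by rewrite /lo /hi ge_min !le_max lexx.
- apply/rowP => j; rewrite mxE /F g0 mul0r addr0 [x ord0 j]mxE clamp_id //.
  + by rewrite lerD2l /lo ge_min lexx.
  + by rewrite lerD2l /hi le_max lexx.
- apply/rowP => j; rewrite mxE /F g1 mul1r.
  have -> : x ord0 j + (y ord0 j - x ord0 j) = y ord0 j by rewrite addrC subrK.
  rewrite [y ord0 j]mxE clamp_id //.
  + by rewrite lerD2l /lo ge_min lexx orbT.
  + by rewrite lerD2l /hi le_max lexx orbT.
- move=> i.
  have -> : (fun t => (\row_k F k t) ord0 i) = F i by apply: funext => t; rewrite mxE.
  apply: key; first exact: gm.
  + by rewrite g0 [x ord0 i]mxE lerD2l /lo ge_min lexx.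
  + by rewrite g0 [x ord0 i]mxE lerD2l /hi le_max lexx.
  + by rewrite g1 [y ord0 i]mxE lerD2l /lo ge_min lexx orbT.
  + by rewrite g1 [y ord0 i]mxE lerD2l /hi le_max lexx orbT.
Qed.
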